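(* Assume (H1) and that $\alpha$ is symmetric, and let $Q$ be a function on the interior $\mathcal{D}^\circ$ of $\mathcal{D}$ with $\nabla Q=q$. Let $F(s)=|\nabla Q(s)|^2-\Delta Q(s)$. Then (i) there is a constant $C\in\mathbb{R}$ with $F(s)\ge C$ for all $s\in\mathcal{D}^\circ$; (ii) $\inf\{F(s): s\in\mathcal{D}^\circ,\ |s|\ge R\}\to+\infty$ as $R\to\infty$.
   Context: $\gamma>0$, $\beta_i,\delta_i\in\mathbb{R}$, $\alpha_{ij}\in\mathbb{R}$; (H1): $\sum_{i,j}\alpha_{ij}z_iz_j>0$ for all $z\in(\mathbb{R}_+)^3\setminus\{0\}$. For $n\ge0$, $x\in[0,1]$: $U(n,x)=\beta_1-\delta_1-n(\alpha_{11}x^2+2\alpha_{21}x(1-x)+\alpha_{31}(1-x)^2)$, $V(n,x)=\beta_2-\delta_2-n(\alpha_{12}x^2+2\alpha_{22}x(1-x)+\alpha_{32}(1-x)^2)$, $W(n,x)=\beta_3-\delta_3-n(\alpha_{13}x^2+2\alpha_{23}x(1-x)+\alpha_{33}(1-x)^2)$. Generator on $(n,x)\in(0,\infty)\times(0,1)$: $\mathcal{L}f=b_N\partial_nf+b_X\partial_xf+\gamma n\,\partial^2_{nn}f+\frac{\gamma x(1-x)}{2n}\partial^2_{xx}f$, with $b_N(n,x)=n[x^2U+2x(1-x)V+(1-x)^2W]$ and $b_X(n,x)=(1-x)x^2(U-V)+x(1-x)^2(V-W)$. $u=\tan(\pi/\sqrt2)$, $\mathcal{D}=\{(s_1,s_2):s_2\ge0,\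 s_2\ge us_1\}$. $\psi(n,x)=\sqrt{2n/\gamma}\,(\cos\frac{\arccos(2x-1)}{\sqrt2},\sin\frac{\arccos(2x-1)}{\sqrt2})$, a bijection $(0,\infty)\times[0,1]\to\mathcal{D}\setminus\{(0,0)\}$. For $s\in\mathcal{D}^\circ$, $q(s):=-(\mathcal{L}\psi)(\psi^{-1}(s))$ (componentwise); when $\alpha$ is symmetric $q$ is a gradient field on $\mathcal{D}^\circ$ (e.g. in the neutral case $Q(s)=\ln|s|+\frac12\ln\sin(\sqrt2\theta(s))-(\beta-\delta-\frac{\alpha\gamma}{4}|s|^2)\frac{|s|^2}{4}$, $\theta(s)$ the polar angle). *)

(* Defs.v *)
From Stdlib Require Import Reals Lra ClassicalEpsilon.
Open Scope R_scope.

(* Derivative of a one-variable function at a point, as a total function: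
   the (unique) l with derivable_pt_lim f x l when it exists, an
   unspecified real otherwise. *)
Definition derive1 (f : R -> R) (x : R) : R :=
  epsilon (inhabits 0) (fun l => derivable_pt_lim f x l).

Definition d1 (g : R -> R -> R) (a b : R) : R := derive1 (fun t => g t b) a.
Definition d2 (g : R -> R -> R) (a b : R) : R := derive1 (fun t => g a t) b.

Definition H1 (alpha : nat -> nat -> R) : Prop :=
  forall z1 z2 z3 : R, 0 <= z1 -> 0 <= z2 -> 0 <= z3 ->
    ~ (z1 = 0 /\ z2 = 0 /\ z3 = 0) ->
    0 < alpha 1%nat 1%nat * z1 * z1 + alpha 1%nat 2%nat * z1 * z2 + alpha 1%nat 3%nat * z1 * z3
      + alpha 2%nat 1%nat * z2 * z1 + alpha 2%nat 2%nat * z2 * z2 + alpha 2%nat 3%nat * z2 * z3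
      + alpha 3%nat 1%nat * z3 * z1 + alpha 3%nat 2%nat * z3 * z2 + alpha 3%nat 3%nat * z3 * z3.

Definition alpha_symmetric (alpha : nat -> nat -> R) : Prop :=
  forall i j : nat, alpha i j = alpha j i.

Section Model.
Variables (gamma : R) (beta delta : nat -> R) (alpha : nat -> nat -> R).

Definition Uf (n x : R) : R :=
  beta 1%nat - delta 1%nat
  - n * (alpha 1%nat 1%nat * x ^ 2 + 2 * alpha 2%nat 1%nat * x * (1 - x)
         + alpha 3%nat 1%nat * (1 - x) ^ 2).
Definition Vf (n x : R) : R :=
  beta 2%nat - delta 2%nat
  - n * (alpha 1%nat 2%nat * x ^ 2 + 2 * alpha 2%nat 2%nat * x * (1 - x)
         + alpha 3%nat 2%nat * (1 - x) ^ 2).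
Definition Wf (n x : R) : R :=
  beta 3%nat - delta 3%nat
  - n * (alpha 1%nat 3%nat * x ^ 2 + 2 * alpha 2%nat 3%nat * x * (1 - x)
         + alpha 3%nat 3%nat * (1 - x) ^ 2).

Definition bN (n x : R) : R :=
  n * (x ^ 2 * Uf n x + 2 * x * (1 - x) * Vf n x + (1 - x) ^ 2 * Wf n x).
Definition bX (n x : R) : R :=
  (1 - x) * x ^ 2 * (Uf n x - Vf n x) + x * (1 - x) ^ 2 * (Vf n x - Wf n x).

Definition gen (f : R -> R -> R) (n x : R) : R :=
  bN n x * d1 f n x + bX n x * d2 f n x
  + gamma * n * d1 (d1 f) n x
  + gamma * x * (1 - x) / (2 * n) * d2 (d2 f) n x.

Definition psi1 (n x : R) : R :=
  sqrt (2 * n / gamma) * cos (acos (2 * x - 1) / sqrt 2).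
Definition psi2 (n x : R) : R :=
  sqrt (2 * n / gamma) * sin (acos (2 * x - 1) / sqrt 2).

Definition psi_inv (s : R * R) : R * R :=
  epsilon (inhabits (0, 0)) (fun p : R * R =>
    0 < fst p /\ 0 <= snd p <= 1 /\
    psi1 (fst p) (snd p) = fst s /\ psi2 (fst p) (snd p) = snd s).

Definition q1 (s1 s2 : R) : R :=
  let p := psi_inv (s1, s2) in - gen psi1 (fst p) (snd p).
Definition q2 (s1 s2 : R) : R :=
  let p := psi_inv (s1, s2) in - gen psi2 (fst p) (snd p).

End Model.

Definition u_slope : R := tan (PI / sqrt 2).

(* interior of D = {s2 >= 0, s2 >= u s1} *)
Definition D_int (s1 s2 : R) : Prop := 0 < s2 /\ u_slope * s1 < s2.

Definition Ffun (Q : R -> R -> R) (s1 s2 : R) : R :=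
  (d1 Q s1 s2) ^ 2 + (d2 Q s1 s2) ^ 2 - (d1 (d1 Q) s1 s2 + d2 (d2 Q) s1 s2).

(* Main.v *)
Require Import Defs.
From Stdlib Require Import Reals Lra Psatz ClassicalEpsilon.
From Coquelicot Require Import Coquelicot.
Require Import Defs.
Open Scope R_scope.

Lemma derive1_ok f x l : is_derive f x l -> derive1 f x = l.
Proof.
  intro H. apply is_derive_Reals in H.
  unfold derive1.
  pose proof (epsilon_spec (inhabits 0) (fun l => derivable_pt_lim f x l) (ex_intro _ l H)) as H'.
  eapply uniqueness_limite; eauto.
Qed.

Lemma loc_of a x (P : R -> Prop) : 0 < a -> (forall t, Rabs (t - x) < a -> P t) -> locally x P.
Proof.
  intros Ha H. exists (mkposreal a Ha). intros y Hy. apply H. exact Hy.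
Qed.

Lemma derive1_loc f h x l : locally x (fun t => h t = f t) -> is_derive h x l -> derive1 f x = l.
Proof.
  intros Hl Hd. apply derive1_ok. eapply is_derive_ext_loc; eauto.
Qed.

Lemma Derive_acos y : -1 < y < 1 -> Derive (fun t => acos t) y = -1 / sqrt (1 - y²) /\ ex_derive (fun t => acos t) y.
Proof.
  intros Hy.
  assert (H: is_derive acos y (-1 / sqrt (1 - y²))).
  { apply is_derive_Reals. rewrite <- (derive_pt_acos y Hy).
    apply (derive_pt_eq_1 _ _ _ (derivable_pt_acos y Hy)). reflexivity. }
  split. now apply is_derive_unique. eexists; eauto.
Qed.

Definition Rr g n := sqrt (2*n/g).
Definition gg x := acos (2*x-1) / sqrt 2.
Definition ww x := sqrt (1 - (2*x-1)²).
Definition gp x := -2/(sqrt 2 * ww x).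
Definition gpp x := -4*(2*x-1)/(sqrt 2 * ww x ^ 3).

Ltac side := unfold Rdiv in *; repeat match goal with |- _ /\ _ => split | |- True => exact I end; try nra.

Lemma sqrt2_pos : 0 < sqrt 2.
Proof. apply sqrt_lt_R0; lra. Qed.

Lemma Rr_pos g n : 0 < g -> 0 < n -> 0 < Rr g n.
Proof. intros; unfold Rr; apply sqrt_lt_R0. apply Rdiv_lt_0_compat; lra. Qed.

Lemma ww_pos x : 0 < x < 1 -> 0 < ww x.
Proof. intros; unfold ww; apply sqrt_lt_R0. unfold Rsqr; nra. Qed.

Lemma is_d1_psi1 g n x : 0 < g -> 0 < n ->
  is_derive (fun t => psi1 g t x) n (cos (gg x)/(g*Rr g n)).
Proof.
  intros Hg Hn. unfold psi1. auto_derive.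
  - apply Rdiv_lt_0_compat; lra.
  - pose proof (Rr_pos g n Hg Hn). unfold gg, Rr, Rdiv in *. field. split; lra.
Qed.

Lemma is_d1_psi2 g n x : 0 < g -> 0 < n ->
  is_derive (fun t => psi2 g t x) n (sin (gg x)/(g*Rr g n)).
Proof.
  intros Hg Hn. unfold psi2. auto_derive.
  - apply Rdiv_lt_0_compat; lra.
  - pose proof (Rr_pos g n Hg Hn). unfold gg, Rr, Rdiv in *. field. split; lra.
Qed.

Lemma is_d11_psi1 g n x : 0 < g -> 0 < n ->
  is_derive (fun t => cos (gg x)/(g*Rr g t)) n (- cos (gg x)/(g^2*Rr g n ^ 3)).
Proof.
  intros Hg Hn. unfold Rr. auto_derive.
  - pose proof (Rr_pos g n Hg Hn). assert (0 < 2*n/g) by (apply Rdiv_lt_0_compat; lra). unfold Rr in *. side.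
  - pose proof (Rr_pos g n Hg Hn). unfold gg, Rr, Rdiv in *.
    field. split; lra.
Qed.

Lemma is_d11_psi2 g n x : 0 < g -> 0 < n ->
  is_derive (fun t => sin (gg x)/(g*Rr g t)) n (- sin (gg x)/(g^2*Rr g n ^ 3)).
Proof.
  intros Hg Hn. unfold Rr. auto_derive.
  - pose proof (Rr_pos g n Hg Hn). assert (0 < 2*n/g) by (apply Rdiv_lt_0_compat; lra). unfold Rr in *. side.
  - pose proof (Rr_pos g n Hg Hn). unfold gg, Rr, Rdiv in *.
    field. split; lra.
Qed.

Lemma acos_lin x : 0 < x < 1 ->
  ex_derive (fun t => acos t) (2*x + - (1)) /\
  Derive (fun t => acos t) (2*x + -(1)) = -1 / ww x.
Proof.
  intros H. replace (2*x + -(1)) with (2*x-1) by ring.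
  destruct (Derive_acos (2*x-1)) as [H1 H2]. lra. split; auto.
Qed.

Lemma is_d2_psi1 g n x : 0 < x < 1 ->
  is_derive (fun t => psi1 g n t) x (- Rr g n * sin (gg x) * gp x).
Proof.
  intros Hx. destruct (acos_lin x Hx) as [E1 E2]. pose proof (ww_pos x Hx).
  pose proof sqrt2_pos.
  unfold psi1. auto_derive. auto.
  rewrite E2. unfold gg, Rr, gp. replace (2*x + -(1)) with (2*x-1) by ring.
  unfold Rdiv. field. side.
Qed.

Lemma is_d2_psi2 g n x : 0 < x < 1 ->
  is_derive (fun t => psi2 g n t) x (Rr g n * cos (gg x) * gp x).
Proof.
  intros Hx. destruct (acos_lin x Hx) as [E1 E2]. pose proof (ww_pos x Hx).
  pose proof sqrt2_pos.
  unfold psi2. auto_derive. auto.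
  rewrite E2. unfold gg, Rr, gp. replace (2*x + -(1)) with (2*x-1) by ring.
  unfold Rdiv. field. side.
Qed.

Lemma ww_sq x : 0 < x < 1 -> ww x ^ 2 = 4 * x * (1 - x).
Proof.
  intros. unfold ww. rewrite pow2_sqrt. unfold Rsqr; ring. unfold Rsqr; nra.
Qed.

Lemma sqrt2_sq : sqrt 2 ^ 2 = 2.
Proof. rewrite pow2_sqrt; lra. Qed.

Lemma gp_sq x : 0 < x < 1 -> gp x ^ 2 = 1 / (2 * x * (1 - x)).
Proof.
  intros Hx. pose proof (ww_pos x Hx). pose proof sqrt2_pos.
  unfold gp. replace ((-2 / (sqrt 2 * ww x))^2) with (4 / (sqrt 2 ^2 * ww x ^2)).
  rewrite ww_sq, sqrt2_sq by auto. field. split; nra.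
  field. split; lra.
Qed.

Lemma gpp_eq x : 0 < x < 1 -> gpp x = - (2*x-1) / (sqrt 2 * ww x * (x * (1 - x))).
Proof.
  intros Hx. pose proof (ww_pos x Hx). pose proof sqrt2_pos.
  unfold gpp. replace (ww x ^ 3) with (ww x * ww x ^ 2) by ring.
  rewrite ww_sq by auto. field. split; [nra|split;[nra|lra]].
Qed.

Lemma is_gp x : 0 < x < 1 -> is_derive gp x (gpp x).
Proof.
  intros Hx. destruct (acos_lin x Hx) as [E1 E2]. pose proof (ww_pos x Hx).
  pose proof sqrt2_pos.
  unfold gp, gpp, ww, Rsqr. auto_derive.
  - unfold ww, Rsqr in H. split. nra. split; [|auto]. unfold Rminus in *. nra.
  - unfold ww, Rsqr in H. unfold Rminus, Rdiv in *. field. nra.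
Qed.


Lemma is_gg x : 0 < x < 1 -> is_derive gg x (gp x).
Proof.
  intros Hx. destruct (acos_lin x Hx) as [E1 E2]. pose proof (ww_pos x Hx).
  pose proof sqrt2_pos.
  unfold gg, gp. auto_derive. auto.
  rewrite E2. unfold Rdiv. field. lra.
Qed.

Lemma locn n (P : R -> Prop) : 0 < n -> (forall t, 0 < t -> P t) -> locally n P.
Proof.
  intros Hn H. apply (loc_of n); auto. intros t Ht. apply H.
  apply Rabs_def2 in Ht. lra.
Qed.

Lemma locx x (P : R -> Prop) : 0 < x < 1 -> (forall t, 0 < t < 1 -> P t) -> locally x P.
Proof.
  intros Hx H. apply (loc_of (Rmin x (1-x))). apply Rmin_glb_lt; lra.
  intros t Ht. apply H. apply Rabs_def2 in Ht. 
  pose proof (Rmin_l x (1-x)). pose proof (Rmin_r x (1-x)). lra.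
Qed.

Section PsiD.
Variables (g n x : R).
Hypotheses (Hg : 0 < g) (Hn : 0 < n) (Hx : 0 < x < 1).

Lemma d1psi1 : d1 (psi1 g) n x = cos (gg x)/(g*Rr g n).
Proof. apply derive1_ok. apply is_d1_psi1; auto. Qed.
Lemma d1psi2 : d1 (psi2 g) n x = sin (gg x)/(g*Rr g n).
Proof. apply derive1_ok. apply is_d1_psi2; auto. Qed.
Lemma d2psi1 : d2 (psi1 g) n x = - Rr g n * sin (gg x) * gp x.
Proof. apply derive1_ok. apply is_d2_psi1; auto. Qed.
Lemma d2psi2 : d2 (psi2 g) n x = Rr g n * cos (gg x) * gp x.
Proof. apply derive1_ok. apply is_d2_psi2; auto. Qed.

Lemma d11psi1 : d1 (d1 (psi1 g)) n x = - cos (gg x)/(g^2*Rr g n ^ 3).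
Proof.
  unfold d1 at 1. eapply derive1_loc; [|apply is_d11_psi1; auto].
  apply locn; auto. intros t Ht. symmetry. apply derive1_ok. apply is_d1_psi1; auto.
Qed.
Lemma d11psi2 : d1 (d1 (psi2 g)) n x = - sin (gg x)/(g^2*Rr g n ^ 3).
Proof.
  unfold d1 at 1. eapply derive1_loc; [|apply is_d11_psi2; auto].
  apply locn; auto. intros t Ht. symmetry. apply derive1_ok. apply is_d1_psi2; auto.
Qed.

Lemma d22psi1 : d2 (d2 (psi1 g)) n x = - Rr g n * (cos (gg x) * gp x ^ 2 + sin (gg x) * gpp x).
Proof.
  unfold d2 at 1. eapply derive1_loc with (h := fun t => - Rr g n * sin (gg t) * gp t).
  apply locx; auto. intros t Ht. symmetry. apply derive1_ok. apply is_d2_psi1; auto.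
  pose proof (is_gg x Hx) as G1. pose proof (is_gp x Hx) as G2.
  auto_derive. split. eexists; eauto. split. eexists; eauto. auto.
  replace (Derive (fun x0 : R => gg x0) x) with (gp x) by (symmetry; apply is_derive_unique; exact G1).
  replace (Derive (fun x0 : R => gp x0) x) with (gpp x) by (symmetry; apply is_derive_unique; exact G2). ring.
Qed.

Lemma d22psi2 : d2 (d2 (psi2 g)) n x = Rr g n * (- sin (gg x) * gp x ^ 2 + cos (gg x) * gpp x).
Proof.
  unfold d2 at 1. eapply derive1_loc with (h := fun t => Rr g n * cos (gg t) * gp t).
  apply locx; auto. intros t Ht. symmetry. apply derive1_ok. apply is_d2_psi2; auto.
  pose proof (is_gg x Hx) as G1. pose proof (is_gp x Hx) as G2.
  auto_derive. split. eexists; eauto. split. eexists; eauto. auto.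
  replace (Derive (fun x0 : R => gg x0) x) with (gp x) by (symmetry; apply is_derive_unique; exact G1).
  replace (Derive (fun x0 : R => gp x0) x) with (gpp x) by (symmetry; apply is_derive_unique; exact G2). ring.
Qed.

End PsiD.

Section Poly.
Variables (beta delta : nat -> R) (alpha : nat -> nat -> R).
Definition bb i := beta i - delta i.
Definition uu i x := alpha 1%nat i * x^2 + 2 * alpha 2%nat i * x * (1-x) + alpha 3%nat i * (1-x)^2.
Definition B0 x := x^2 * bb 1%nat + 2*x*(1-x) * bb 2%nat + (1-x)^2 * bb 3%nat.
Definition Ap x := x^2 * uu 1%nat x + 2*x*(1-x) * uu 2%nat x + (1-x)^2 * uu 3%nat x.
Definition D0 x := x * (bb 1%nat - bb 2%nat) + (1-x) * (bb 2%nat - bb 3%nat).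
Definition D1 x := x * (uu 1%nat x - uu 2%nat x) + (1-x) * (uu 2%nat x - uu 3%nat x).

Lemma bN_eq n x : bN beta delta alpha n x = n * (B0 x - n * Ap x).
Proof. unfold bN, Uf, Vf, Wf, B0, Ap, bb, uu. ring. Qed.
Lemma bX_eq n x : bX beta delta alpha n x = x * (1-x) * (D0 x - n * D1 x).
Proof. unfold bX, Uf, Vf, Wf, D0, D1, bb, uu. ring. Qed.

Definition aF g rho c := 1/rho - B0 ((1+c)/2)/2 + g*rho*Ap ((1+c)/2)/4.
Definition bF g rho c S := S * (D0 ((1+c)/2) - g*rho/2 * D1 ((1+c)/2))/(2*sqrt 2) + c/(sqrt 2*rho*S).

Section Gen.
Variables (g n x : R).
Hypotheses (Hg : 0 < g) (Hn : 0 < n) (Hx : 0 < x < 1).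

Lemma gen_psi1 : gen g beta delta alpha (psi1 g) n x =
  - (aF g (Rr g n ^2) (2*x-1) * (Rr g n * cos (gg x)) - bF g (Rr g n ^ 2) (2*x-1) (ww x) * (Rr g n * sin (gg x))).
Proof.
  unfold gen. rewrite d1psi1, d2psi1, d11psi1, d22psi1 by auto.
  rewrite bN_eq. rewrite bX_eq. 
  assert (E: x * (1-x) = ww x ^ 2 / 4) by (rewrite ww_sq; auto; field).
  rewrite E. 
  rewrite gp_sq, gpp_eq by auto.
  unfold aF, bF. replace ((1 + (2*x-1))/2) with x by field.
  pose proof (Rr_pos g n Hg Hn). pose proof (ww_pos x Hx). pose proof sqrt2_pos.
  assert (Hn2 : n = g * Rr g n ^ 2 / 2).
  { unfold Rr. rewrite pow2_sqrt. field. lra. apply Rlt_le, Rdiv_lt_0_compat; lra. }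
  set (Rq := Rr g n) in *. clearbody Rq. subst n.
  unfold gp. field. repeat split; nra.
Qed.

Lemma gen_psi2 : gen g beta delta alpha (psi2 g) n x =
  - (aF g (Rr g n ^2) (2*x-1) * (Rr g n * sin (gg x)) + bF g (Rr g n ^ 2) (2*x-1) (ww x) * (Rr g n * cos (gg x))).
Proof.
  unfold gen. rewrite d1psi2, d2psi2, d11psi2, d22psi2 by auto.
  rewrite bN_eq. rewrite bX_eq. 
  assert (E: x * (1-x) = ww x ^ 2 / 4) by (rewrite ww_sq; auto; field).
  rewrite E. 
  rewrite gp_sq, gpp_eq by auto.
  unfold aF, bF. replace ((1 + (2*x-1))/2) with x by field.
  pose proof (Rr_pos g n Hg Hn). pose proof (ww_pos x Hx). pose proof sqrt2_pos.
  assert (Hn2 : n = g * Rr g n ^ 2 / 2).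
  { unfold Rr. rewrite pow2_sqrt. field. lra. apply Rlt_le, Rdiv_lt_0_compat; lra. }
  set (Rq := Rr g n) in *. clearbody Rq. subst n.
  unfold gp. field. repeat split; nra.
Qed.
End Gen.
End Poly.

Definition rho s1 s2 := s1^2 + s2^2.
Definition th s1 s2 := acos (s1 / sqrt (rho s1 s2)).
Definition ph s1 s2 := sqrt 2 * th s1 s2.

Lemma sqrt2_bounds : 1 < sqrt 2 < 2.
Proof.
  split.
  - rewrite <- sqrt_1. apply sqrt_lt_1; lra.
  - replace 2 with (sqrt 4) at 2. apply sqrt_lt_1; lra.
    replace 4 with (2*2) by ring. rewrite sqrt_square; lra.
Qed.

Lemma T_bounds : PI/2 < PI / sqrt 2 < PI.
Proof.
  pose proof sqrt2_bounds. pose proof PI_RGT_0. split.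
  - apply Rmult_lt_compat_l. lra. apply Rinv_lt_contravar; nra.
  - apply Rlt_le_trans with (PI/1). apply Rmult_lt_compat_l. lra.
    apply Rinv_lt_contravar; nra. lra.
Qed.

Section Th.
Variables s1 s2 : R.
Hypothesis HD : D_int s1 s2.

Lemma rho_pos : 0 < rho s1 s2.
Proof. destruct HD. unfold rho. nra. Qed.

Lemma r_pos : 0 < sqrt (rho s1 s2).
Proof. apply sqrt_lt_R0, rho_pos. Qed.

Lemma r_sq : sqrt (rho s1 s2) ^ 2 = rho s1 s2.
Proof. rewrite pow2_sqrt. auto. apply Rlt_le, rho_pos. Qed.

Lemma ratio_in : -1 < s1 / sqrt (rho s1 s2) < 1.
Proof.
  pose proof r_pos. pose proof r_sq. pose proof rho_pos. destruct HD.
  assert (E: (s1 / sqrt (rho s1 s2))^2 = s1^2 / rho s1 s2).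
  { replace ((s1 / sqrt (rho s1 s2))^2) with (s1^2/(sqrt (rho s1 s2))^2) by (field; lra). now rewrite H0. }
  assert (s1^2 / rho s1 s2 < 1).
  { apply Rmult_lt_reg_r with (rho s1 s2); auto. unfold rho in *. field_simplify; nra. }
  nra.
Qed.

Lemma cos_th : cos (th s1 s2) = s1 / sqrt (rho s1 s2).
Proof. unfold th. apply cos_acos. pose proof ratio_in. lra. Qed.

Lemma th_bound : 0 < th s1 s2 < PI.
Proof. unfold th. apply acos_bound_lt, ratio_in. Qed.

Lemma sin_th : sin (th s1 s2) = s2 / sqrt (rho s1 s2).
Proof.
  pose proof th_bound as Hb. pose proof r_pos as Hr. pose proof r_sq as Hr2. destruct HD as [Hs2 _].
  pose proof cos_th as Hc.
  assert (Hs0: 0 <= sin (th s1 s2)) by (apply sin_ge_0; lra).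
  assert (Hq0: 0 <= s2 / sqrt (rho s1 s2)) by (apply Rlt_le, Rdiv_lt_0_compat; lra).
  pose proof (sin2_cos2 (th s1 s2)) as Hsc. unfold Rsqr in Hsc. rewrite Hc in Hsc.
  set (r := sqrt (rho s1 s2)) in *. unfold rho in Hr2.
  assert (E: sin (th s1 s2) ^2 = (s2 / r)^2).
  { replace ((s2 / r)^2) with (s2^2 / r^2) by (field; lra).
    replace (sin (th s1 s2) ^2) with (1 - s1 / r * (s1 / r)) by nra.
    replace (s1 / r * (s1 / r)) with (s1^2/r^2) by (field; lra).
    rewrite Hr2. field. nra. }
  nra.
Qed.

Lemma th_lt_T : th s1 s2 < PI / sqrt 2.
Proof.
  pose proof T_bounds. pose proof th_bound. pose proof r_pos.
  pose proof cos_th. pose proof sin_th. destruct HD as [Hs2 Hu].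
  destruct (Rle_or_lt 0 s1) as [Hs1|Hs1].
  - destruct (Rle_or_lt (th s1 s2) (PI/2)). lra.
    assert (cos (th s1 s2) < 0) by (apply cos_lt_0; lra).
    assert (0 <= s1 / sqrt (rho s1 s2)) by (apply Rdiv_le_0_compat; lra). lra.
  - destruct (Rlt_or_le (th s1 s2) (PI / sqrt 2)) as [|Hge]. auto. exfalso.
    set (T := PI / sqrt 2) in *.
    assert (cT : cos T < 0) by (apply cos_lt_0; lra).
    assert (sin (th s1 s2 - T) >= 0) by (apply Rle_ge, sin_ge_0; lra).
    rewrite sin_minus in H4.
    unfold u_slope in Hu. fold T in Hu. unfold tan in Hu.
    assert (Hm : s2 * cos T < sin T * s1).
    { assert (X := Rmult_lt_compat_r (- cos T) _ _ ltac:(lra) Hu).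
      replace (sin T / cos T * s1 * - cos T) with (- (sin T * s1)) in X by (field; lra). lra. }
    assert (Hu2 : sin (th s1 s2) * cos T < sin T * cos (th s1 s2)).
    { rewrite H2, H3. apply Rmult_lt_reg_r with (sqrt (rho s1 s2)); auto.
      field_simplify; lra. }
    lra.
Qed.

End Th.

Lemma ph_bound s1 s2 : D_int s1 s2 -> 0 < ph s1 s2 < PI.
Proof.
  intros HD. pose proof (th_lt_T s1 s2 HD). pose proof (th_bound s1 s2 HD).
  pose proof sqrt2_bounds. unfold ph. split. nra.
  apply Rmult_lt_reg_r with (/ sqrt 2). apply Rinv_0_lt_compat; lra.
  replace (sqrt 2 * th s1 s2 * / sqrt 2) with (th s1 s2) by (field; lra). exact H.
Qed.

Lemma psi_inv_eq g s1 s2 : 0 < g -> D_int s1 s2 ->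
  psi_inv g (s1, s2) = (g * rho s1 s2 / 2, (1 + cos (ph s1 s2))/2).
Proof.
  intros Hg HD.
  pose proof (rho_pos s1 s2 HD) as Hrho. pose proof (r_pos s1 s2 HD) as Hr.
  pose proof (r_sq s1 s2 HD) as Hr2. pose proof (cos_th s1 s2 HD) as Hc.
  pose proof (sin_th s1 s2 HD) as Hs. pose proof (ph_bound s1 s2 HD) as Hph.
  pose proof (th_bound s1 s2 HD) as Hth. pose proof sqrt2_bounds as Hk.
  set (n0 := g * rho s1 s2 / 2). set (x0 := (1 + cos (ph s1 s2))/2).
  assert (Hn0 : 2 * n0 / g = rho s1 s2) by (unfold n0; field; lra).
  assert (Hx0 : 2 * x0 - 1 = cos (ph s1 s2)) by (unfold x0; field).
  assert (Hac : acos (2 * x0 - 1) / sqrt 2 = th s1 s2).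
  { rewrite Hx0, acos_cos by lra. unfold ph. field. lra. }
  assert (spec0 : 0 < n0 /\ 0 <= x0 <= 1 /\ psi1 g n0 x0 = s1 /\ psi2 g n0 x0 = s2).
  { split. unfold n0. apply Rdiv_lt_0_compat; nra.
    split. pose proof (COS_bound (ph s1 s2)). unfold x0; lra.
    unfold psi1, psi2. rewrite Hn0, Hac, Hc, Hs. split; field; lra. }
  assert (uniq : forall p : R * R, (0 < fst p /\ 0 <= snd p <= 1 /\
      psi1 g (fst p) (snd p) = s1 /\ psi2 g (fst p) (snd p) = s2) -> p = (n0, x0)).
  { intros [n x] [Hn [Hx [H1 H2]]]. simpl in *. unfold psi1, psi2 in H1, H2.
    set (G := acos (2 * x - 1) / sqrt 2) in *.
    assert (HRn : sqrt (2 * n / g) ^ 2 = 2 * n / g).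
    { apply pow2_sqrt. apply Rlt_le, Rdiv_lt_0_compat; lra. }
    assert (Hn' : 2 * n / g = rho s1 s2).
    { rewrite <- HRn. unfold rho. rewrite <- H1, <- H2.
      pose proof (sin2_cos2 G) as Hsc. unfold Rsqr in Hsc. nra. }
    assert (Hn2 : n = n0) by (unfold n0; rewrite <- Hn'; field; lra).
    rewrite Hn' in H1, H2.
    assert (HcG : cos G = s1 / sqrt (rho s1 s2)) by (rewrite <- H1 at 1; field; lra).
    assert (HGb : 0 <= G <= PI).
    { pose proof (acos_bound (2*x-1)). unfold G. split.
      apply Rdiv_le_0_compat; lra.
      apply Rmult_le_reg_r with (sqrt 2). lra.
      replace (acos (2 * x - 1) / sqrt 2 * sqrt 2) with (acos (2*x-1)) by (field; lra). nra. }
    assert (HG : G = th s1 s2) by (unfold th; rewrite <- HcG; rewrite acos_cos; auto).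
    assert (Hacx : acos (2*x-1) = ph s1 s2).
    { unfold ph. rewrite <- HG. unfold G. field. lra. }
    assert (Hx2 : 2*x-1 = cos (ph s1 s2)) by (rewrite <- Hacx; rewrite cos_acos; lra).
    rewrite Hn2. f_equal. unfold x0. lra. }
  unfold psi_inv. apply uniq.
  apply (epsilon_spec (inhabits (0,0)) (fun p : R * R =>
    0 < fst p /\ 0 <= snd p <= 1 /\
    psi1 g (fst p) (snd p) = fst (s1,s2) /\ psi2 g (fst p) (snd p) = snd (s1,s2))).
  exists (n0, x0). exact spec0.
Qed.

Section QE.
Variables (g : R) (beta delta : nat -> R) (alpha : nat -> nat -> R).
Hypothesis Hg : 0 < g.

Lemma q_eq s1 s2 : D_int s1 s2 ->
  q1 g beta delta alpha s1 s2 =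
    aF beta delta alpha g (rho s1 s2) (cos (ph s1 s2)) * s1
    - bF beta delta alpha g (rho s1 s2) (cos (ph s1 s2)) (sin (ph s1 s2)) * s2 /\
  q2 g beta delta alpha s1 s2 =
    aF beta delta alpha g (rho s1 s2) (cos (ph s1 s2)) * s2
    + bF beta delta alpha g (rho s1 s2) (cos (ph s1 s2)) (sin (ph s1 s2)) * s1.
Proof.
  intros HD.
  pose proof (rho_pos s1 s2 HD) as Hrho. pose proof (r_pos s1 s2 HD) as Hr.
  pose proof (r_sq s1 s2 HD) as Hr2. pose proof (cos_th s1 s2 HD) as Hc.
  pose proof (sin_th s1 s2 HD) as Hs. pose proof (ph_bound s1 s2 HD) as Hph.
  pose proof sqrt2_bounds as Hk.
  assert (Hsp : 0 < sin (ph s1 s2)) by (apply sin_gt_0; lra).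
  pose proof (sin2_cos2 (ph s1 s2)) as Hsc. unfold Rsqr in Hsc.
  set (n0 := g * rho s1 s2 / 2). set (x0 := (1 + cos (ph s1 s2))/2).
  assert (Hn0 : 0 < n0) by (unfold n0; apply Rdiv_lt_0_compat; nra).
  assert (Hx0 : 0 < x0 < 1) by (unfold x0; nra).
  assert (HR : Rr g n0 = sqrt (rho s1 s2)) by (unfold Rr, n0; f_equal; field; lra).
  assert (Hc0 : 2 * x0 - 1 = cos (ph s1 s2)) by (unfold x0; field).
  assert (Hw : ww x0 = sin (ph s1 s2)).
  { unfold ww. rewrite Hc0. rewrite <- (sqrt_Rsqr (sin (ph s1 s2))) by lra.
    f_equal. unfold Rsqr. lra. }
  assert (Hgg : gg x0 = th s1 s2).
  { unfold gg. rewrite Hc0, acos_cos by lra. unfold ph. field. lra. }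
  unfold q1, q2. rewrite psi_inv_eq by auto. simpl. fold n0 x0.
  rewrite gen_psi1, gen_psi2 by auto.
  rewrite HR, Hc0, Hw, Hgg, Hr2, Hc, Hs.
  split; field; lra.
Qed.
End QE.

Ltac rwD H := let t := type of H in match t with is_derive _ _ ?l =>
  match goal with |- context [Derive ?f ?p] =>
    replace (Derive f p) with l by (symmetry; apply is_derive_unique; exact H) end end.

Ltac exD := match goal with H : is_derive _ _ ?l |- ex_derive _ _ => exists l; exact H end.

Lemma is_acos y : -1 < y < 1 -> is_derive acos y (-1 / sqrt (1 - y²)).
Proof.
  intros Hy. apply is_derive_Reals. rewrite <- (derive_pt_acos y Hy).
  apply (derive_pt_eq_1 _ _ _ (derivable_pt_acos y Hy)). reflexivity.
Qed.

Lemma sqrt_ratio s1 s2 : D_int s1 s2 ->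
  sqrt (1 - (s1 / sqrt (rho s1 s2))²) = s2 / sqrt (rho s1 s2).
Proof.
  intros HD. rewrite <- (sin_th s1 s2 HD). unfold th. rewrite sin_acos. auto.
  pose proof (ratio_in s1 s2 HD). lra.
Qed.

Lemma is_rho1 s1 s2 : is_derive (fun t => rho t s2) s1 (2 * s1).
Proof. unfold rho. auto_derive. auto. ring. Qed.
Lemma is_rho2 s1 s2 : is_derive (fun t => rho s1 t) s2 (2 * s2).
Proof. unfold rho. auto_derive. auto. ring. Qed.

Lemma is_sqrtrho1 s1 s2 : D_int s1 s2 -> is_derive (fun t => sqrt (rho t s2)) s1 (s1 / sqrt (rho s1 s2)).
Proof.
  intros HD. pose proof (rho_pos s1 s2 HD). pose proof (r_pos s1 s2 HD). pose proof (is_rho1 s1 s2) as H1.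
  auto_derive. split. exD. split; auto. rwD H1. field. lra.
Qed.
Lemma is_sqrtrho2 s1 s2 : D_int s1 s2 -> is_derive (fun t => sqrt (rho s1 t)) s2 (s2 / sqrt (rho s1 s2)).
Proof.
  intros HD. pose proof (rho_pos s1 s2 HD). pose proof (r_pos s1 s2 HD). pose proof (is_rho2 s1 s2) as H1.
  auto_derive. split. exD. split; auto. rwD H1. field. lra.
Qed.

Lemma is_ph1 s1 s2 : D_int s1 s2 ->
  is_derive (fun t => ph t s2) s1 (- sqrt 2 * s2 / rho s1 s2).
Proof.
  intros HD. pose proof (rho_pos s1 s2 HD) as Hrho. pose proof (r_pos s1 s2 HD) as Hr.
  pose proof (r_sq s1 s2 HD) as Hr2. pose proof (is_sqrtrho1 s1 s2 HD) as H1.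
  pose proof (is_acos _ (ratio_in s1 s2 HD)) as HA. rewrite sqrt_ratio in HA by auto.
  destruct HD as [Hs2 _].
  pose proof (is_rho1 s1 s2) as H0.
  unfold ph, th. auto_derive. split. exD. split. exD. split; auto. lra.
  rwD H0. rwD HA.
  assert (E : s1^2 = sqrt (rho s1 s2)^2 - s2^2) by (rewrite Hr2; unfold rho; ring).
  set (r := sqrt (rho s1 s2)) in *. clearbody r. rewrite <- Hr2.
  field_simplify; try lra. rewrite E. field. lra.
Qed.

Lemma is_ph2 s1 s2 : D_int s1 s2 ->
  is_derive (fun t => ph s1 t) s2 (sqrt 2 * s1 / rho s1 s2).
Proof.
  intros HD. pose proof (rho_pos s1 s2 HD) as Hrho. pose proof (r_pos s1 s2 HD) as Hr.
  pose proof (r_sq s1 s2 HD) as Hr2. pose proof (is_sqrtrho2 s1 s2 HD) as H1.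
  pose proof (is_acos _ (ratio_in s1 s2 HD)) as HA. rewrite sqrt_ratio in HA by auto.
  destruct HD as [Hs2 _].
  pose proof (is_rho2 s1 s2) as H0.
  unfold ph, th. auto_derive. split. exD. split. exD. split; auto. lra.
  rwD H0. rwD HA.
  assert (E : s1^2 = sqrt (rho s1 s2)^2 - s2^2) by (rewrite Hr2; unfold rho; ring).
  set (r := sqrt (rho s1 s2)) in *. clearbody r. rewrite <- Hr2.
  field. lra.
Qed.

Section PolyD.
Variables (beta delta : nat -> R) (alpha : nat -> nat -> R).
Definition B0p x := Derive (B0 beta delta) x.
Definition App x := Derive (Ap alpha) x.
Definition uup i x := 2 * alpha 1%nat i * x + 2 * alpha 2%nat i * (1 - 2*x) - 2 * alpha 3%nat i * (1 - x).
Definition D0p (x : R) := bb beta delta 1%nat - 2 * bb beta delta 2%nat + bb beta delta 3%nat.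
Definition D1p x := (uu alpha 1%nat x - uu alpha 2%nat x) + x * (uup 1%nat x - uup 2%nat x)
   - (uu alpha 2%nat x - uu alpha 3%nat x) + (1 - x) * (uup 2%nat x - uup 3%nat x).

Lemma is_B0 x : is_derive (B0 beta delta) x (B0p x).
Proof. apply Derive_correct. unfold B0. auto_derive. auto. Qed.
Lemma is_Ap x : is_derive (Ap alpha) x (App x).
Proof. apply Derive_correct. unfold Ap, uu. auto_derive. auto. Qed.
Lemma is_D0 x : is_derive (D0 beta delta) x (D0p x).
Proof. unfold D0, D0p. auto_derive. auto. ring. Qed.
Lemma is_D1 x : is_derive (D1 alpha) x (D1p x).
Proof. unfold D1, D1p, uup, uu. auto_derive. auto. ring. Qed.
End PolyD.

Lemma locD1 s1 s2 : D_int s1 s2 -> locally s1 (fun t => D_int t s2).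
Proof.
  unfold D_int. intros [Hs2 Hu]. set (u := u_slope) in *.
  pose proof (Rabs_pos u).
  apply (loc_of ((s2 - u * s1) / (Rabs u + 1))). apply Rdiv_lt_0_compat; lra.
  intros t Ht. split; auto.
  assert (H1 : u * (t - s1) <= Rabs u * Rabs (t - s1)).
  { rewrite <- Rabs_mult. apply Rle_abs. }
  assert (H2 : Rabs u * Rabs (t - s1) <= Rabs u * ((s2 - u * s1) / (Rabs u + 1))).
  { apply Rmult_le_compat_l; lra. }
  assert (H3 : Rabs u * ((s2 - u * s1) / (Rabs u + 1)) < s2 - u * s1).
  { apply Rmult_lt_reg_r with (Rabs u + 1). lra. field_simplify; nra. }
  lra.
Qed.

Lemma locD2 s1 s2 : D_int s1 s2 -> locally s2 (fun t => D_int s1 t).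
Proof.
  unfold D_int. intros [Hs2 Hu].
  apply (loc_of (Rmin s2 (s2 - u_slope * s1))). apply Rmin_glb_lt; lra.
  intros t Ht. apply Rabs_def2 in Ht.
  pose proof (Rmin_l s2 (s2 - u_slope * s1)). pose proof (Rmin_r s2 (s2 - u_slope * s1)).
  split; lra.
Qed.

Section Main.
Variables (g : R) (beta delta : nat -> R) (alpha : nat -> nat -> R) (Q : R -> R -> R).
Hypothesis Hg : 0 < g.
Hypothesis HQ : forall s1 s2 : R, D_int s1 s2 ->
          derivable_pt_lim (fun t => Q t s2) s1 (q1 g beta delta alpha s1 s2) /\
          derivable_pt_lim (fun t => Q s1 t) s2 (q2 g beta delta alpha s1 s2).

Definition E1 s2 t := aF beta delta alpha g (rho t s2) (cos (ph t s2)) * t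
   - bF beta delta alpha g (rho t s2) (cos (ph t s2)) (sin (ph t s2)) * s2.
Definition E2 s1 t := aF beta delta alpha g (rho s1 t) (cos (ph s1 t)) * t
   + bF beta delta alpha g (rho s1 t) (cos (ph s1 t)) (sin (ph s1 t)) * s1.

Lemma d1Q s1 s2 : D_int s1 s2 -> d1 Q s1 s2 = E1 s2 s1.
Proof.
  intros HD. unfold E1. rewrite <- (proj1 (q_eq g beta delta alpha Hg s1 s2 HD)).
  apply derive1_ok. apply is_derive_Reals. apply HQ; auto.
Qed.
Lemma d2Q s1 s2 : D_int s1 s2 -> d2 Q s1 s2 = E2 s1 s2.
Proof.
  intros HD. unfold E2. rewrite <- (proj2 (q_eq g beta delta alpha Hg s1 s2 HD)).
  apply derive1_ok. apply is_derive_Reals. apply HQ; auto.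
Qed.

Definition Fpol rh c S :=
  let x := (1+c)/2 in
  let al := aF beta delta alpha g rh c in
  let be := bF beta delta alpha g rh c S in
  let alr := -1/rh^2 + g * Ap alpha x / 4 in
  let Dd := D0 beta delta x - g*rh/2 * D1 alpha x in
  let Ddx := D0p beta delta x - g*rh/2 * D1p alpha x in
  let kbp := (c*Dd - S^2*Ddx/2)/2 - (S^2+c^2)/(rh*S^2) in
  rh*(al^2+be^2) - (2*rh*alr + 2*al + kbp).

Ltac sideD := repeat match goal with |- _ /\ _ => split | |- True => exact I end;
  try exD.

Lemma F_eq s1 s2 : D_int s1 s2 ->
  Ffun Q s1 s2 = Fpol (rho s1 s2) (cos (ph s1 s2)) (sin (ph s1 s2)).
Proof.
  intros HD.
  pose proof (rho_pos s1 s2 HD) as Hrho. pose proof (ph_bound s1 s2 HD) as Hph.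
  assert (Hsp : 0 < sin (ph s1 s2)) by (apply sin_gt_0; lra).
  pose proof sqrt2_pos as Hk.
  pose proof (is_ph1 s1 s2 HD) as P1. pose proof (is_rho1 s1 s2) as P2.
  pose proof (is_ph2 s1 s2 HD) as P1'. pose proof (is_rho2 s1 s2) as P2'.
  pose proof (is_B0 beta delta ((1 + cos (ph s1 s2))/2)) as P3.
  pose proof (is_Ap alpha ((1 + cos (ph s1 s2))/2)) as P4.
  pose proof (is_D0 beta delta ((1 + cos (ph s1 s2))/2)) as P5.
  pose proof (is_D1 alpha ((1 + cos (ph s1 s2))/2)) as P6.
  evar (l1 : R). assert (HE1 : is_derive (E1 s2) s1 l1).
  { unfold E1, aF, bF. auto_derive. sideD; apply Rgt_not_eq; repeat apply Rmult_lt_0_compat; auto. subst l1; reflexivity. }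
  evar (l2 : R). assert (HE2 : is_derive (E2 s1) s2 l2).
  { unfold E2, aF, bF. auto_derive. sideD; apply Rgt_not_eq; repeat apply Rmult_lt_0_compat; auto. subst l2; reflexivity. }
  assert (D11 : d1 (d1 Q) s1 s2 = l1).
  { unfold d1 at 1. eapply derive1_loc; [|exact HE1].
    generalize (locD1 s1 s2 HD). apply filter_imp. intros t Ht.
    symmetry. apply d1Q; auto. }
  assert (D22 : d2 (d2 Q) s1 s2 = l2).
  { unfold d2 at 1. eapply derive1_loc; [|exact HE2].
    generalize (locD2 s1 s2 HD). apply filter_imp. intros t Ht.
    symmetry. apply d2Q; auto. }
  unfold Ffun. rewrite D11, D22, d1Q, d2Q by auto. subst l1 l2.
  repeat rwD P1. repeat rwD P2. repeat rwD P1'. repeat rwD P2'.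
  repeat rwD P3. repeat rwD P4. repeat rwD P5. repeat rwD P6.
  unfold E1, E2, Fpol, aF, bF. unfold rho in *. unfold Rdiv.
  field. split; [lra|split; lra].
Qed.
End Main.

Lemma cont_of_der f : (forall x, exists l, is_derive f x l) -> forall x, continuity_pt f x.
Proof.
  intros H x. destruct (H x) as [l Hl]. apply is_derive_Reals in Hl.
  apply derivable_continuous_pt. exists l. exact Hl.
Qed.

Lemma bound01 f : (forall x, exists l, is_derive f x l) ->
  exists K, 0 <= K /\ forall x, 0 <= x <= 1 -> Rabs (f x) <= K.
Proof.
  intros H. pose proof (cont_of_der f H) as C.
  destruct (continuity_ab_maj f 0 1 ltac:(lra) (fun c _ => C c)) as [M1 [HM1 _]].
  assert (C' : forall c, continuity_pt (fun x => - f x) c).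
  { intros c. apply continuity_pt_opp. apply C. }
  destruct (continuity_ab_maj (fun x => - f x) 0 1 ltac:(lra) (fun c _ => C' c)) as [M2 [HM2 _]].
  exists (Rabs (f M1) + Rabs (f M2)). split. pose proof (Rabs_pos (f M1)); pose proof (Rabs_pos (f M2)); lra.
  intros x Hx. specialize (HM1 x Hx). specialize (HM2 x Hx).
  pose proof (Rle_abs (f M1)). pose proof (Rle_abs (- f M2)). rewrite Rabs_Ropp in H1.
  apply Rabs_le. pose proof (Rabs_pos (f M1)). pose proof (Rabs_pos (f M2)). split; lra.
Qed.

Section Bnd.
Variables (g : R) (beta delta : nat -> R) (alpha : nat -> nat -> R).
Hypothesis Hg : 0 < g.
Hypothesis HH1 : H1 alpha.

Lemma Ap_pos x : 0 <= x <= 1 -> 0 < Ap alpha x.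
Proof.
  intros Hx.
  assert (E : Ap alpha x =
    alpha 1%nat 1%nat * (x^2) * (x^2) + alpha 1%nat 2%nat * (x^2) * (2*x*(1-x)) + alpha 1%nat 3%nat * (x^2) * ((1-x)^2)
      + alpha 2%nat 1%nat * (2*x*(1-x)) * (x^2) + alpha 2%nat 2%nat * (2*x*(1-x)) * (2*x*(1-x)) + alpha 2%nat 3%nat * (2*x*(1-x)) * ((1-x)^2)
      + alpha 3%nat 1%nat * ((1-x)^2) * (x^2) + alpha 3%nat 2%nat * ((1-x)^2) * (2*x*(1-x)) + alpha 3%nat 3%nat * ((1-x)^2) * ((1-x)^2)).
  { unfold Ap, uu. ring. }
  rewrite E. apply HH1; nra.
Qed.

Lemma Ap_min : exists a0, 0 < a0 /\ forall x, 0 <= x <= 1 -> a0 <= Ap alpha x.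
Proof.
  assert (C : forall c, continuity_pt (Ap alpha) c).
  { apply cont_of_der. intro x. exists (App alpha x). apply is_Ap. }
  destruct (continuity_ab_min (Ap alpha) 0 1 ltac:(lra) (fun c _ => C c)) as [m [Hm Hm01]].
  exists (Ap alpha m). split. apply Ap_pos; auto. auto.
Qed.

End Bnd.

Section FB.
Variables (g : R) (beta delta : nat -> R) (alpha : nat -> nat -> R).

Lemma Fpol_lb rh c S : 0 < rh -> 0 < S ->
  let x := (1 + c)/2 in
  rh * (B0 beta delta x - g * rh * Ap alpha x / 2)^2 / 4 - g * rh * Ap alpha x / 2
   + S^2 * (D0p beta delta x - g * rh / 2 * D1p alpha x) / 4
  <= Fpol g beta delta alpha rh c S.
Proof.
  intros Hr HS x.
  set (Dd := D0 beta delta x - g*rh/2 * D1 alpha x).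
  set (X := S * Dd / 2 + c / (rh * S)).
  assert (HB : bF beta delta alpha g rh c S ^ 2 = X^2 / 2).
  { pose proof sqrt2_pos. transitivity (X^2 / sqrt 2 ^ 2).
    unfold bF, X, Dd. fold x. field. lra. rewrite sqrt2_sq. reflexivity. }
  unfold Fpol. fold x. rewrite HB.
  assert (R1 : 0 <= 1 / rh + rh * S^2 * Dd^2 / 8 + c^2 / (2 * rh * S^2) + (S^2 + c^2) / (rh * S^2)).
  { assert (0 < 1/rh) by (apply Rdiv_lt_0_compat; lra).
    assert (0 <= rh * S^2 * Dd^2 / 8) by (apply Rdiv_le_0_compat; [|lra]; apply Rmult_le_pos; [apply Rmult_le_pos; [lra|apply pow2_ge_0]|apply pow2_ge_0]).
    assert (HS2 : 0 < S^2) by (apply pow_lt; lra).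
    assert (0 <= c^2 / (2 * rh * S^2)) by (apply Rdiv_le_0_compat; [apply pow2_ge_0|]; apply Rmult_lt_0_compat; lra).
    assert (0 <= (S^2 + c^2) / (rh * S^2)) by (apply Rdiv_le_0_compat; [pose proof (pow2_ge_0 c); lra|]; apply Rmult_lt_0_compat; lra).
    lra. }
  match goal with |- ?L <= ?F => assert (E : F = L + (1 / rh + rh * S^2 * Dd^2 / 8 + c^2 / (2 * rh * S^2) + (S^2 + c^2) / (rh * S^2))) end.
  { unfold X, Dd, aF. fold x. field. lra. }
  rewrite E. lra.
Qed.
End FB.

Theorem mainTheorem14
  (gamma : R) (beta delta : nat -> R) (alpha : nat -> nat -> R)
  (Hgamma : 0 < gamma) (HH1 : H1 alpha) (Hsym : alpha_symmetric alpha)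
  (Q : R -> R -> R)
  (HQ : forall s1 s2 : R, D_int s1 s2 ->
          derivable_pt_lim (fun t => Q t s2) s1 (q1 gamma beta delta alpha s1 s2) /\
          derivable_pt_lim (fun t => Q s1 t) s2 (q2 gamma beta delta alpha s1 s2)) :
  (exists C : R, forall s1 s2 : R, D_int s1 s2 -> C <= Ffun Q s1 s2) /\
  (forall M : R, exists R0 : R, forall s1 s2 : R,
      D_int s1 s2 -> R0 <= sqrt (s1 ^ 2 + s2 ^ 2) -> M <= Ffun Q s1 s2).
Proof.
  set (g := gamma) in *. clearbody g.
  destruct (Ap_min alpha HH1) as [a0 [Ha0 Hamin]].
  destruct (bound01 (B0 beta delta)) as [KB [HKB HB]].
  { intro x. exists (B0p beta delta x). apply is_B0. }
  destruct (bound01 (Ap alpha)) as [KA [HKA HA]].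
  { intro x. exists (App alpha x). apply is_Ap. }
  destruct (bound01 (D0p beta delta)) as [K0 [HK0 HD0]].
  { intro x. exists 0. unfold D0p. auto_derive; auto. }
  destruct (bound01 (D1p alpha)) as [K1 [HK1 HD1]].
  { intro x. eexists. unfold D1p, uup, uu. auto_derive. auto. reflexivity. }
  assert (LB : forall s1 s2, D_int s1 s2 ->
    0 < rho s1 s2 /\ 0 <= (1 + cos (ph s1 s2))/2 <= 1 /\
    rho s1 s2 * (B0 beta delta ((1 + cos (ph s1 s2))/2) - g * rho s1 s2 * Ap alpha ((1 + cos (ph s1 s2))/2) / 2)^2 / 4 - g * rho s1 s2 * KA / 2
      - (K0 + g * rho s1 s2 / 2 * K1) / 4 <= Ffun Q s1 s2).
  { intros s1 s2 HD. set (rh := rho s1 s2). set (x := (1 + cos (ph s1 s2))/2).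
    pose proof (rho_pos s1 s2 HD) as Hrho. pose proof (ph_bound s1 s2 HD) as Hph.
    assert (Hsp : 0 < sin (ph s1 s2)) by (apply sin_gt_0; lra).
    pose proof (SIN_bound (ph s1 s2)). pose proof (COS_bound (ph s1 s2)).
    assert (Hx : 0 <= x <= 1) by (unfold x; lra).
    split; auto. split; auto.
    rewrite (F_eq g beta delta alpha Q Hgamma HQ s1 s2 HD).
    pose proof (Fpol_lb g beta delta alpha rh (cos (ph s1 s2)) (sin (ph s1 s2)) Hrho Hsp) as L.
    simpl in L. fold x in L. fold rh.
    specialize (HA x Hx). specialize (HD0 x Hx). specialize (HD1 x Hx).
    apply Rabs_le_between in HA. apply Rabs_le_between in HD0. apply Rabs_le_between in HD1.
    set (Sv := sin (ph s1 s2)) in *.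
    assert (HS2 : Sv^2 <= 1) by nra.
    set (d := D0p beta delta x - g * rh / 2 * D1p alpha x) in *.
    assert (Hd0 : d = D0p beta delta x - g * rh / 2 * D1p alpha x) by reflexivity.
    assert (Hrh0 : 0 < rh) by exact Hrho.
    clearbody d Sv x rh.
    assert (Hd : Rabs d <= K0 + g * rh / 2 * K1).
    { rewrite Hd0. apply Rabs_le. assert (0 < g * rh) by nra. split; nra. }
    assert (Hd2 : - (K0 + g * rh / 2 * K1) <= Sv^2 * d).
    { apply Rabs_le_between in Hd. assert (0 <= Sv^2) by nra. nra. }
    assert (g * rh * Ap alpha x / 2 <= g * rh * KA / 2).
    { apply Rmult_le_compat_r. lra. apply Rmult_le_compat_l. nra. lra. }
    lra. }
  assert (Growth : forall M, exists R0, forall s1 s2, D_int s1 s2 ->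
      R0 <= sqrt (s1 ^ 2 + s2 ^ 2) -> M <= Ffun Q s1 s2).
  { intros M.
    remember (g^2 * a0^2 / 64) as c3 eqn:Ec3.
    remember (g * KA / 2 + g * K1 / 8) as c1 eqn:Ec1.
    remember (K0 / 4) as c0 eqn:Ec0.
    assert (Hc3 : 0 < c3) by (rewrite Ec3; apply Rdiv_lt_0_compat; [apply Rmult_lt_0_compat; apply pow_lt; lra|lra]).
    remember (1 + (c1 + c0 + Rabs M) / c3) as T eqn:ET.
    remember (4 * KB / (g * a0)) as r1 eqn:Er1.
    exists (Rmax r1 T). intros s1 s2 HD HR.
    destruct (LB s1 s2 HD) as [Hrho [Hx L]].
    change (Rmax r1 T <= sqrt (rho s1 s2)) in HR.
    remember (rho s1 s2) as rh eqn:Erh.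
    remember ((1 + cos (ph s1 s2))/2) as x eqn:Ex.
    assert (Hc1 : 0 <= c1) by (rewrite Ec1; nra).
    assert (Hc0 : 0 <= c0) by (rewrite Ec0; lra).
    assert (HT : 1 <= T). { rewrite ET. pose proof (Rabs_pos M).
      assert (0 <= (c1 + c0 + Rabs M) / c3) by (apply Rdiv_le_0_compat; lra). lra. }
    assert (Hsq : sqrt rh ^ 2 = rh) by (apply pow2_sqrt; lra).
    pose proof (Rmax_l r1 T). pose proof (Rmax_r r1 T).
    assert (Hrh : Rmax r1 T <= rh) by nra.
    assert (Hr1 : r1 <= rh) by lra. assert (HrT : T <= rh) by lra.
    specialize (HB x Hx). apply Rabs_le_between in HB.
    specialize (Hamin x Hx).
    assert (Hga : 2 * KB <= g * rh * a0 / 2).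
    { rewrite Er1 in Hr1. apply Rmult_le_compat_r with (r := g * a0 / 2) in Hr1; [|nra].
      replace (4 * KB / (g * a0) * (g * a0 / 2)) with (2 * KB) in Hr1 by (field; lra). lra. }
    assert (Hy : g * rh * a0 / 4 <= g * rh * Ap alpha x / 2 - B0 beta delta x).
    { assert (g * rh * a0 <= g * rh * Ap alpha x) by (apply Rmult_le_compat_l; nra). lra. }
    assert (Hy2 : (g * rh * a0 / 4)^2 <= (B0 beta delta x - g * rh * Ap alpha x / 2)^2).
    { assert (0 <= g * rh * a0 / 4) by nra. nra. }
    assert (Hmain : c3 * rh^3 - c1 * rh - c0 <= Ffun Q s1 s2).
    { assert (rh * (g * rh * a0 / 4)^2 / 4 <= rh * (B0 beta delta x - g * rh * Ap alpha x / 2)^2 / 4) by nra.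
      rewrite Ec3, Ec1, Ec0. nra. }
    assert (HcT : c3 * T = c3 + c1 + c0 + Rabs M) by (rewrite ET; field; lra).
    assert (H2 : c3 * T <= c3 * rh^2) by (apply Rmult_le_compat_l; nra).
    pose proof (Rle_abs M).
    assert (E3 : c3 * rh^3 = rh * (c3 * rh^2)) by ring.
    assert (X1 : rh * (c1 + c0 + Rabs M) <= rh * (c3 * rh^2)) by (apply Rmult_le_compat_l; lra).
    assert (X2 : 0 <= (rh - 1) * (c0 + Rabs M)) by (apply Rmult_le_pos; pose proof (Rabs_pos M); lra).
    assert (c1 * rh + c0 + Rabs M <= c3 * rh^3) by nra.
    lra. }
  split; auto.
  destruct (Growth 0) as [R0 HR0].
  remember (- (g * R0^2 * KA / 2) - (K0 + g * R0^2 / 2 * K1) / 4) as c eqn:Ec.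
  exists (Rmin 0 c). intros s1 s2 HD.
  pose proof (Rmin_l 0 c). pose proof (Rmin_r 0 c).
  destruct (Rle_or_lt R0 (sqrt (s1 ^ 2 + s2 ^ 2))) as [Hle|Hlt].
  - specialize (HR0 s1 s2 HD Hle). lra.
  - destruct (LB s1 s2 HD) as [Hrho [Hx L]].
    change (sqrt (rho s1 s2) < R0) in Hlt.
    remember (rho s1 s2) as rh eqn:Erh.
    assert (Hsq : sqrt rh ^ 2 = rh) by (apply pow2_sqrt; lra).
    pose proof (sqrt_pos rh).
    assert (rh < R0^2) by nra.
    assert (0 <= rh * (B0 beta delta ((1 + cos (ph s1 s2))/2) - g * rh * Ap alpha ((1 + cos (ph s1 s2))/2) / 2)^2 / 4).
    { apply Rdiv_le_0_compat; [apply Rmult_le_pos; [lra|apply pow2_ge_0]|lra]. }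
    assert (g * rh * KA <= g * R0^2 * KA) by (apply Rmult_le_compat_r; [lra|]; apply Rmult_le_compat_l; lra).
    assert (g * rh * K1 <= g * R0^2 * K1) by (apply Rmult_le_compat_r; [lra|]; apply Rmult_le_compat_l; lra).
    rewrite Ec in *. lra.
Qed.
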